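(* Let $G$ be a finite group, let $n,m$ be positive integers with $m\mid n$, let $l\in\mathbb{Z}$ and let $\varepsilon=(\varepsilon_d)_{d\mid n}\in \mathrm{VPA}_n(G)$. Let $\chi$ be either an ordinary character of $G$ or a Brauer character of $G$ modulo a prime not dividing $n$. Then $$\mu(\zeta_m^l,\varepsilon^{n/m},\chi)=\sum_{\xi\in\mathbb{C},\ \xi^{n/m}=\zeta_m^l}\mu(\xi,\varepsilon,\chi).$$
   Context: For a positive integer $k$, $\zeta_k$ denotes a complex primitive $k$-th root of unity, chosen so that $\zeta_n^{n/m}=\zeta_m$; $\mathrm{Tr}_{F/K}$ denotes the trace of a number field extension. $\sum_{x^G}$ denotes a sum over representatives of the conjugacy classes of $G$. Brauer characters modulo a prime $p$ are taken with respect to a sufficiently large $p$-modular system. A distribution of virtual partial augmentations of order $n$ for $G$ is a list $\varepsilon=(\varepsilon_d)_{d\mid n}$ of integer-valued class functions of $G$ such that: (V1) $\sum_{x^G}\varepsilon_d(x)=1$ for each $d$; (V2) $\varepsilon_d(1)=0$ if $d\ne n$; (V3) $\varepsilon_d(x)=0$ if $|x|$ does not divide $n/d$; (V4) for every ordinary character $\chi$ of $G$ or Brauer character $\chi$ of $G$ modulo a prime not dividing $n$, and every $n$-th root of unity $\xi$, the number $\mu(\xi,\varepsilon,\chi)=\frac{1}{n}\sum_{x^G}\sum_{d\mid n}\varepsilon_d(x)\mathrm{Tr}_{\mathbb{Q}(\zeta_n^d)/\mathbb{Q}}(\chi(x)\xi^{-d})$ is a non-negative integer. $\mathrm{VPA}_n(G)$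 is the set of these lists; the same formula defines $\mu(\xi,\varepsilon,\chi)$ for any such list. For $m\mid n$, $\varepsilon^{n/m}=((\varepsilon^{n/m})_d)_{d\mid m}$ is defined by $(\varepsilon^{n/m})_d(g)=\varepsilon_{dn/m}(g)$, and $\mu(\zeta_m^l,\varepsilon^{n/m},\chi)=\frac1m\sum_{x^G}\sum_{d\mid m}(\varepsilon^{n/m})_d(x)\mathrm{Tr}_{\mathbb{Q}(\zeta_m^d)/\mathbb{Q}}(\chi(x)\zeta_m^{-ld})$. *)

(* Defs.v *)
From HB Require Import structures.
From mathcomp Require Import all_boot all_order all_algebra all_fingroup all_solvable all_field all_character.
Set Implicit Arguments. Unset Strict Implicit. Unset Printing Implicit Defensive.
Import Order.TTheory GRing.Theory Num.Theory.
Local Open Scope ring_scope.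

(* Chosen automorphism sigma_j of algC with sigma_j(z) = z^j for every k-th
   root of unity z (j coprime to k); its restriction to Q(zeta_k) is the
   Galois automorphism zeta_k |-> zeta_k^j. *)
Definition Qn_aut (k j : nat) : algC -> algC :=
  match @idP (coprime j k) with
  | ReflectT h => fun a => sval (Qn_aut_exists h) a
  | ReflectF _ => id
  end.

(* Tr_{Q(zeta_k)/Q}(a) = sum over Gal(Q(zeta_k)/Q) ~ (Z/k)^* of sigma_j(a),
   meaningful (independent of choices) for a in Q(zeta_k). *)
Definition cycTr (k : nat) (a : algC) : algC :=
  \sum_(j < k | coprime j k) Qn_aut k j a.

Section Defs.
Variables (gT : finGroupType) (G : {group gT}).

(* mu(xi, eps, chi) for a list eps = (eps_d)_{d | n} (eps d for d %| n);
   Q(zeta_n^d) = Q(zeta_{n/d}) since zeta_n^d is a primitive (n/d)-th root. *)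
Definition mu (n : nat) (xi : algC) (eps : nat -> 'CF(G)) (chi : 'CF(G)) : algC :=
  n%:R^-1 * \sum_(xG in classes G) \sum_(d <- divisors n)
     eps d (repr xG) * cycTr (n %/ d) (chi (repr xG) * xi ^- d).

Definition eps_pow (eps : nat -> 'CF(G)) (q : nat) : nat -> 'CF(G) :=
  fun d => eps (d * q)%N.

(* Brauer characters of G modulo p w.r.t. a sufficiently large p-modular
   system: F a field of characteristic p containing a primitive e-th root of
   unity w, where e is the p'-part of |G|; the lifting of p'-roots of unity
   sends w^i to z^i for a primitive e-th root of unity z in algC.  The value at
   a p-regular g is the sum of the lifted eigenvalues (with multiplicity) of
   rG g.  Values at p-singular elements are unconstrained. *)
Definition is_brauer (p : nat) (chi : 'CF(G)) : Prop :=
  exists (F : fieldType) (w : F) (z : algC) (dim : nat)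
         (rG : mx_representation F G dim),
    [/\ p \in [pchar F],
        (#|G|`_(p^')).-primitive_root w,
        (#|G|`_(p^')).-primitive_root z &
        forall g, g \in G -> (p^'.-elt g)%g ->
          chi g = \sum_(i < #|G|`_(p^'))
                    (mup (w ^+ i) (char_poly (rG g)))%:R * z ^+ i].

Definition admissible_char (n : nat) (chi : 'CF(G)) : Prop :=
  chi \is a character \/
  exists p, [/\ prime p, ~~ (p %| n)%N & is_brauer p chi].

Definition is_vpa (n : nat) (eps : nat -> 'CF(G)) : Prop :=
  [/\ (forall d, (d %| n)%N -> forall x, x \in G -> eps d x \in Num.int),
      (forall d, (d %| n)%N -> \sum_(xG in classes G) eps d (repr xG) = 1),
      (forall d, (d %| n)%N -> d != n -> eps d 1%g = 0),
      (forall d x, (d %| n)%N -> x \in G -> ~~ (#[x]%g %| n %/ d)%N -> eps d x = 0) &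
      (forall chi, admissible_char n chi ->
         forall xi : algC, xi ^+ n = 1 -> mu n xi eps chi \in Num.nat)].

End Defs.

(* Main.v *)
Require Import Defs.
From HB Require Import structures.
From mathcomp Require Import all_boot all_order all_algebra all_fingroup all_solvable all_field all_character zify.
Import Order.TTheory GRing.Theory Num.Theory.
Local Open Scope ring_scope.

Lemma Qn_aut_sum k j (I : Type) (r : seq I) (P : pred I) (F : I -> algC) :
  Qn_aut k j (\sum_(i <- r | P i) F i) = \sum_(i <- r | P i) Qn_aut k j (F i).
Proof.
rewrite /Qn_aut; destruct (@idP (coprime j k)) as [h|h] => //=.
by rewrite rmorph_sum.
Qed.

Lemma cycTr_sum k (I : Type) (r : seq I) (P : pred I) (F : I -> algC) :
  cycTr k (\sum_(i <- r | P i) F i) = \sum_(i <- r | P i) cycTr k (F i).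
Proof.
rewrite /cycTr (eq_bigr _ (fun j _ => Qn_aut_sum _ _ _ _ _ _)).
exact: exchange_big.
Qed.

Lemma cycTr0 k : cycTr k 0 = 0.
Proof. by rewrite -(big_nil 0 +%R predT (fun _ : nat => 0)) cycTr_sum !big_nil. Qed.

Lemma cycTr_natl k (q : nat) a : cycTr k (q%:R * a) = q%:R * cycTr k a.
Proof.
have -> : q%:R * a = \sum_(0 <= i < q) a by rewrite sumr_const_nat subn0 mulr_natl.
by rewrite cycTr_sum sumr_const_nat subn0 mulr_natl.
Qed.

Lemma sum_mod (q m l0 : nat) (f : nat -> algC) : (l0 < m)%N ->
  \sum_(j < (q * m)%N | (j %% m == l0)%N) f j = \sum_(k < q) f (k * m + l0)%N.
Proof.
move=> lt; rewrite -(big_mkord (fun j => (j %% m == l0)%N) f) -(big_mkord xpredT (fun k => f (k * m + l0)%N)).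
elim: q => [|q IH]; first by rewrite mul0n !big_geq.
rewrite big_nat_recr //= -IH mulSn addnC (big_cat_nat _ (n := q * m)) //=; last by rewrite leq_addr.
congr (_ + _).
rewrite -{1}(add0n (q * m)%N) big_addn addKn.
rewrite big_mkord (bigD1 (Ordinal lt)) /=; last by rewrite addnC modnMDl modn_small.
rewrite big1 ?addr0 ?(addnC l0) //.
move=> i /andP[h1 h2]; rewrite addnC modnMDl modn_small // in h1.
suff : i = Ordinal lt by move=> e; rewrite e eqxx in h2.
apply/val_inj; rewrite /= (eqP h1) //.
Qed.

Lemma geom0 (y : algC) q : y ^+ q = 1 -> y != 1 -> \sum_(k < q) y ^+ k = 0.
Proof.
move=> yq y1; have := subrX1 y q; rewrite yq subrr => /esym/eqP.
by rewrite mulf_eq0 subr_eq0 (negPf y1) => /eqP.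
Qed.

Lemma S_eval (q m : nat) (zn zm : algC) (l0 d : nat) : (0 < q)%N -> (0 < m)%N ->
  (q * m)%N.-primitive_root zn -> zn ^+ q = zm -> (l0 < m)%N ->
  \sum_(j < (q * m)%N | (j %% m == l0)%N) (zn ^+ j) ^- d =
  if (q %| d)%N then q%:R * ((zm ^+ l0) ^+ (d %/ q))^-1 else 0.
Proof.
move=> q0 m0 pr hq lt; rewrite (sum_mod q m l0 (fun j => (zn ^+ j) ^- d)) //.
have zn0 : zn != 0.
  have nz : (q * m)%N != 0%N by rewrite -lt0n muln_gt0 q0 m0.
  apply/negP => /eqP z0; have := prim_expr_order pr; rewrite z0 expr0n (negPf nz).
  by move=> /eqP; rewrite eq_sym oner_eq0.
have zmm : zm ^+ m = 1 by rewrite -hq -exprM prim_expr_order.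
case: ifP => hd.
- rewrite -{1}(divnK hd).
  rewrite (eq_bigr (fun _ => ((zm ^+ l0) ^+ (d %/ q))^-1)); last first.
    move=> k _; congr (_ ^-1).
    rewrite (mulnC (d %/ q)%N q) exprM -(exprM zn) (mulnC _ q) exprM hq exprD (mulnC k m) exprM zmm.
    by rewrite expr1n mul1r.
  by rewrite sumr_const card_ord mulr_natl.
- set y := (zn ^+ (m * d))^-1.
  rewrite (eq_bigr (fun k : 'I_q => ((zn ^+ l0) ^+ d)^-1 * y ^+ k)); last first.
    move=> k _; rewrite /y exprVn -!exprM -invfM -exprD; congr (_ ^-1); congr (_ ^+ _).
    lia.
  rewrite -mulr_sumr geom0 ?mulr0 //.
    rewrite /y exprVn -exprM (_ : (m * d * q = q * m * d)%N); last by lia.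
    rewrite exprM (prim_expr_order pr). by rewrite expr1n invr1.
  rewrite /y invr_eq1 -(prim_order_dvd pr) (mulnC m d) dvdn_pmul2r //.
  by rewrite hd.
Qed.

Lemma div_reindex (q m : nat) (g : nat -> algC) : (0 < q)%N -> (0 < m)%N ->
  (forall d, ~~ (q %| d)%N -> g d = 0) ->
  \sum_(d <- divisors (m * q)) g d = \sum_(d <- divisors m) g (d * q)%N.
Proof.
move=> q0 m0 hg.
rewrite (bigID (fun d => (q %| d)%N)) /= [X in _ + X]big1 ?addr0; last by move=> d /hg.
rewrite -big_filter -(big_map (fun d => (d * q)%N) xpredT g).
apply: perm_big; apply: uniq_perm.
- by rewrite filter_uniq // divisors_uniq.
- rewrite map_inj_uniq ?divisors_uniq //.
  by move=> a b /eqP; rewrite eqn_pmul2r // => /eqP.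
move=> x; rewrite mem_filter -dvdn_divisors ?muln_gt0 ?q0 ?m0 //.
apply/andP/mapP => [[qx xd] | [d dm ->]].
  exists (x %/ q)%N; last by rewrite divnK.
  by rewrite -dvdn_divisors // -(dvdn_pmul2r q0) divnK.
rewrite -dvdn_divisors // in dm.
by rewrite dvdn_mull // dvdn_pmul2r.
Qed.

Theorem lemma3p2 (gT : finGroupType) (G : {group gT}) (zeta : nat -> algC)
  (zeta_prim : forall k, (0 < k)%N -> k.-primitive_root (zeta k))
  (zeta_compat : forall k j, (0 < j)%N -> (0 < k)%N -> (j %| k)%N ->
                   zeta k ^+ (k %/ j) = zeta j)
  (n m : nat) (l : int) (eps : nat -> 'CF(G)) (chi : 'CF(G)) :
  (0 < n)%N -> (0 < m)%N -> (m %| n)%N ->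
  is_vpa n eps -> admissible_char n chi ->
  mu m (zeta m ^ l) (eps_pow eps (n %/ m)) chi =
  \sum_(j < n | (zeta n ^+ j) ^+ (n %/ m) == zeta m ^ l)
     mu n (zeta n ^+ j) eps chi.
Proof.
move=> n0 m0 mn _ _.
have hq := zeta_compat n m m0 n0 mn.
have prn := zeta_prim n n0; have prm := zeta_prim m m0.
case/dvdnP: mn hq => q hn; subst n; rewrite mulnK // => hq.
have q0 : (0 < q)%N by move: n0; rewrite muln_gt0 => /andP[].
set w := zeta m ^ l.
have wm : w ^+ m = 1 by rewrite /w exprnP exprzAC -exprnP (prim_expr_order prm) exp1rz.
have [l0 hw] := prim_rootP prm wm.
rewrite (eq_bigl (fun j : 'I_(q * m) => (j %% m == l0)%N)); last first.
  move=> j /=; rewrite -exprM (mulnC (nat_of_ord j) q) exprM hq hw (eq_prim_root_expr prm) (modn_small (ltn_ord l0)) //.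
set zn := zeta (q * m)%N.
rewrite /mu -mulr_sumr [in RHS]exchange_big /=.
have key : forall x : gT,
  \sum_(i < q * m | (i %% m)%N == l0)
     \sum_(d <- divisors (q * m)) eps d x * cycTr ((q * m) %/ d) (chi x * (zn ^+ i) ^- d)
  = q%:R * \sum_(d <- divisors m) eps (d * q)%N x * cycTr (m %/ d) (chi x * w ^- d).
  move=> x; rewrite exchange_big /=.
  rewrite (eq_bigr (fun d => eps d x * cycTr ((q * m) %/ d) (chi x *
     \sum_(i < q * m | (i %% m)%N == l0) (zn ^+ i) ^- d))); last first.
    by move=> d _; rewrite [chi x * _]mulr_sumr cycTr_sum [eps d x * _]mulr_sumr.
  rewrite mulnC div_reindex //; last first.
    move=> d hd; rewrite (mulnC m q) (@S_eval q m zn (zeta m) l0 d q0 m0 prn hq (ltn_ord l0)).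
    by rewrite (negPf hd) mulr0 cycTr0 mulr0.
  rewrite mulr_sumr; apply: eq_bigr => d _.
  rewrite divnMr // (mulnC m q) (@S_eval q m zn (zeta m) l0 (d * q)%N q0 m0 prn hq (ltn_ord l0)).
  rewrite dvdn_mull // mulnK // -hw mulrCA cycTr_natl.
  by rewrite mulrCA.
rewrite (eq_bigr _ (fun x _ => key (repr x))) -mulr_sumr mulrA.
congr (_ * _).
  by rewrite natrM invfM mulrAC mulVf ?mul1r // pnatr_eq0 -lt0n.
Qed.
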